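(* Let $d\in\mathbb{N}$, $d\geq 2$, and for $\theta\in \mathbb{R}$ let $R_{\theta}\colon \mathbb{R}^{d}\to\mathbb{R}^{d}$ be the linear map $R_\theta(x_1,\dots,x_d)=(x_1\cos\theta-x_2\sin\theta,\ x_1\sin\theta+x_2\cos\theta,\ x_3,\dots,x_d)$. (i) For all $\theta_{1},\theta_{2}\in\mathbb{R}$ and $y\in\mathbb{R}^{d}$, $\|R_{\theta_{2}}(y)-R_{\theta_{1}}(y)\|\leq |\theta_{2}-\theta_{1}|\,\|y\|$. (ii) Let $t_{0}>0$ and let $\psi\colon [0,\infty)\to \mathbb{R}$ be a Lipschitz mapping with $\psi(t)=0$ for all $t\geq t_{0}$. Define $\Phi\colon\mathbb{R}^{d}\to\mathbb{R}^{d}$ by $\Phi(x)=R_{\psi(\|x\|)}(x)$. Then $\Phi$ is $(\operatorname{Lip}(\psi)t_{0}+1)$-bilipschitz and $\Phi(x)=x$ for all $x\in \mathbb{R}^{d}\setminus B(0,t_{0})$.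
   Context: $\|\cdot\|$ is the Euclidean norm, $B(0,t_0)$ the open Euclidean ball. $\operatorname{Lip}(\psi)$ is the smallest Lipschitz constant of $\psi$. A mapping is $L$-bilipschitz if it is injective and both it and its inverse are $L$-Lipschitz. *)

(* Defs.v *)
From HB Require Import structures.
From mathcomp Require Import all_boot all_order all_algebra.
From mathcomp Require Import all_classical all_reals all_analysis.
Set Implicit Arguments. Unset Strict Implicit. Unset Printing Implicit Defensive.
Import Order.TTheory GRing.Theory Num.Theory.
Local Open Scope ring_scope.
Local Open Scope classical_set_scope.

Definition enorm {R : realType} {d : nat} (v : 'rV[R]_d) : R :=
  Num.sqrt (\sum_(i < d) v 0 i ^+ 2).

(* k-th coordinate (0-based) of v; 0 if k >= d *)
Definition coord {R : realType} {d : nat} (v : 'rV[R]_d) (k : nat) : R :=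
  \sum_(i < d | val i == k) v 0 i.

Definition Rtheta {R : realType} {d : nat} (th : R) (v : 'rV[R]_d) : 'rV[R]_d :=
  \row_(i < d)
    (if val i == 0%N then coord v 0 * cos th - coord v 1 * sin th
     else if val i == 1%N then coord v 0 * sin th + coord v 1 * cos th
     else v 0 i).

Definition lip_const_nonneg {R : realType} (psi : R -> R) (L : R) : Prop :=
  0 <= L /\ forall s t : R, 0 <= s -> 0 <= t -> `|psi s - psi t| <= L * `|s - t|.

Definition lipschitz_nonneg {R : realType} (psi : R -> R) : Prop :=
  exists L, lip_const_nonneg psi L.

Definition Lip {R : realType} (psi : R -> R) : R :=
  inf [set L | lip_const_nonneg psi L].

(* L-bilipschitz: injective, f L-Lipschitz, and f^{-1} (on the image) L-Lipschitz *)
Definition bilipschitz {R : realType} {d : nat} (f : 'rV[R]_d -> 'rV[R]_d) (L : R) : Prop :=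
  injective f /\
  (forall x y, enorm (f x - f y) <= L * enorm (x - y)) /\
  (forall x y, enorm (x - y) <= L * enorm (f x - f y)).

(* Main.v *)
Require Import Defs.
From HB Require Import structures.
From mathcomp Require Import all_boot all_order all_algebra.
From mathcomp Require Import all_classical all_reals all_analysis.
From mathcomp Require Import lra ring.
Import Order.TTheory GRing.Theory Num.Theory numFieldNormedType.Exports.
Local Open Scope ring_scope.

Lemma abs_sin_le (R : realType) (x : R) : `|sin x| <= `|x|.
Proof.
wlog x0 : x / 0 <= x.
  move=> H; case: (leP 0 x) => [/H//|x0].
  by rewrite -normrN -sinN -(normrN x); apply: H; rewrite oppr_ge0 ltW.
have [|c _ h] := @MVT_segment R sin cos 0 x x0 (fun y _ => is_derive_sin y).
  apply: continuous_subspaceT => y; exact: (@continuous_sin R y).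
rewrite sin0 subr0 in h; rewrite h normrM subr0 (ger0_norm x0).
by have := ler_wpM2r x0 (cos_max c); rewrite mul1r.
Qed.

Lemma cos_bound (R : realType) (x : R) : 2 - 2 * cos x <= x ^+ 2.
Proof.
set t := x / 2.
have ex : x = t + t by rewrite /t -splitr.
have hs : sin t ^+ 2 <= t ^+ 2.
  rewrite -[sin t ^+ 2]real_normK ?num_real // -[t ^+ 2]real_normK ?num_real //.
  have := abs_sin_le _ t; have := normr_ge0 (sin t); nra.
rewrite ex -mulr2n cos_mulr2n cos2sin2 !mulr2n.
nra.
Qed.

Lemma sqrt_le_of (R : realType) (x y : R) : 0 <= y -> x <= y ^+ 2 -> Num.sqrt x <= y.
Proof.
move=> y0 h; rewrite -(ger0_norm y0) -sqrtr_sqr; exact: ler_wsqrtr.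
Qed.

Lemma CS (R : realType) n (a b : 'I_n -> R) :
  (\sum_i a i * b i) ^+ 2 <= (\sum_i a i ^+ 2) * (\sum_i b i ^+ 2).
Proof.
have key : \sum_i \sum_j (a i * b j - a j * b i) ^+ 2 =
  \sum_i \sum_j (a i ^+ 2 * b j ^+ 2) + \sum_i \sum_j (a j ^+ 2 * b i ^+ 2)
  - (\sum_i \sum_j (a i * b i * (a j * b j))) * 2.
  rewrite mulr_suml -sumrN -!big_split /=; apply: eq_bigr => i _.
  rewrite mulr_suml -sumrN -!big_split /=; apply: eq_bigr => j _; ring.
rewrite [X in _ + X - _]exchange_big /= in key.
rewrite -!big_distrlr /= in key.
have : 0 <= \sum_i \sum_j (a i * b j - a j * b i) ^+ 2.
  by apply: sumr_ge0 => i _; apply: sumr_ge0 => j _; apply: sqr_ge0.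
rewrite key expr2.
set A := (\sum_i a i ^+ 2); set B := \sum_i b i ^+ 2; set C := \sum_i a i * b i.
nra.
Qed.

Definition sq {R : realType} {d : nat} (v : 'rV[R]_d) : R := \sum_(i < d) v 0 i ^+ 2.

Lemma enormE {R : realType} {d : nat} (v : 'rV[R]_d) : enorm v = Num.sqrt (sq v).
Proof. by []. Qed.

Lemma sq_ge0 {R : realType} {d : nat} (v : 'rV[R]_d) : 0 <= sq v.
Proof. by apply: sumr_ge0 => i _; apply: sqr_ge0. Qed.

Lemma enorm_ge0 {R : realType} {d : nat} (v : 'rV[R]_d) : 0 <= enorm v.
Proof. exact: sqrtr_ge0. Qed.

Lemma mxBE {R : realType} {d : nat} (u v : 'rV[R]_d) i : (u - v) 0 i = u 0 i - v 0 i.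
Proof. by rewrite !mxE. Qed.

Lemma enorm_sym {R : realType} {d : nat} (x y : 'rV[R]_d) : enorm (x - y) = enorm (y - x).
Proof.
rewrite !enormE /sq; congr Num.sqrt; apply: eq_bigr => i _; rewrite !mxBE; ring.
Qed.

Lemma enorm_tri {R : realType} {d : nat} (u v : 'rV[R]_d) :
  enorm (u + v) <= enorm u + enorm v.
Proof.
rewrite !enormE; apply: sqrt_le_of; first by rewrite addr_ge0 ?sqrtr_ge0.
have e : sq (u + v) = sq u + sq v + 2 * \sum_i u 0 i * v 0 i.
  rewrite /sq mulr_sumr -!big_split /=; apply: eq_bigr => i _; rewrite !mxE; ring.
have hc : \sum_i u 0 i * v 0 i <= Num.sqrt (sq u) * Num.sqrt (sq v).
  apply: le_trans (ler_norm _) _.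
  rewrite -sqrtr_sqr -sqrtrM ?sq_ge0 //; apply: ler_wsqrtr.
  exact: (CS _ _ (fun i => u 0 i) (fun i => v 0 i)).
rewrite e sqrrD !sqr_sqrtr ?sq_ge0 // mulr2n.
lra.
Qed.

Lemma enorm_rev {R : realType} {d : nat} (x y : 'rV[R]_d) :
  `|enorm x - enorm y| <= enorm (x - y).
Proof.
rewrite ler_norml; apply/andP; split.
  have := enorm_tri (y - x) x; rewrite subrK (enorm_sym y x); lra.
have := enorm_tri (x - y) y; rewrite subrK; lra.
Qed.

Lemma sq_split {R : realType} n (v : 'rV[R]_n.+2) :
  sq v = v 0 ord0 ^+ 2 + v 0 (lift ord0 ord0) ^+ 2
         + \sum_(i < n) v 0 (lift ord0 (lift ord0 i)) ^+ 2.
Proof. by rewrite /sq !big_ord_recl addrA. Qed.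

Lemma ord_cases n (i : 'I_n.+2) :
  i = ord0 \/ i = lift ord0 ord0 \/ exists k, i = lift ord0 (lift ord0 k).
Proof.
case: (unliftP ord0 i) => [j ->|->]; last by left.
right; case: (unliftP ord0 j) => [k ->|->]; [right; exists k | left]; done.
Qed.

Lemma coord0 {R : realType} n (v : 'rV[R]_n.+2) : Defs.coord v 0 = v 0 ord0.
Proof. by rewrite /Defs.coord (big_pred1 ord0) // => i /=; rewrite -val_eqE. Qed.

Lemma coord1 {R : realType} n (v : 'rV[R]_n.+2) : Defs.coord v 1 = v 0 (lift ord0 ord0).
Proof. by rewrite /Defs.coord (big_pred1 (lift ord0 ord0)) // => i /=; rewrite -val_eqE. Qed.

Lemma Rth0 {R : realType} n th (v : 'rV[R]_n.+2) :
  Rtheta th v 0 ord0 = v 0 ord0 * cos th - v 0 (lift ord0 ord0) * sin th.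
Proof. by rewrite mxE /= coord0 coord1. Qed.

Lemma Rth1 {R : realType} n th (v : 'rV[R]_n.+2) :
  Rtheta th v 0 (lift ord0 ord0) = v 0 ord0 * sin th + v 0 (lift ord0 ord0) * cos th.
Proof. by rewrite mxE /= coord0 coord1. Qed.

Lemma Rth2 {R : realType} n th (v : 'rV[R]_n.+2) k :
  Rtheta th v 0 (lift ord0 (lift ord0 k)) = v 0 (lift ord0 (lift ord0 k)).
Proof. by rewrite mxE. Qed.

Lemma Rtheta_lin {R : realType} n th (x y : 'rV[R]_n.+2) :
  Rtheta th (x - y) = Rtheta th x - Rtheta th y.
Proof.
apply/rowP => i; rewrite mxBE.
case: (ord_cases _ i) => [->|[->|[k ->]]]; rewrite ?Rth0 ?Rth1 ?Rth2 !mxBE; ring.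
Qed.

Lemma alg_id {R : realType} (a b c s : R) :
  c ^+ 2 + s ^+ 2 = 1 -> (a * c - b * s) ^+ 2 + (a * s + b * c) ^+ 2 = a ^+ 2 + b ^+ 2.
Proof.
move=> h; transitivity ((a ^+ 2 + b ^+ 2) * (c ^+ 2 + s ^+ 2)); first by ring.
by rewrite h mulr1.
Qed.

Lemma alg1 {R : realType} (a b c s : R) :
  c ^+ 2 + s ^+ 2 = 1 -> (a * c - b * s) * c - (a * s + b * c) * (- s) = a.
Proof.
move=> h; transitivity (a * (c ^+ 2 + s ^+ 2)); first by ring.
by rewrite h mulr1.
Qed.

Lemma alg2 {R : realType} (a b c s : R) :
  c ^+ 2 + s ^+ 2 = 1 -> (a * c - b * s) * (- s) + (a * s + b * c) * c = b.
Proof.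
move=> h; transitivity (b * (c ^+ 2 + s ^+ 2)); first by ring.
by rewrite h mulr1.
Qed.

Lemma enorm_Rtheta {R : realType} n th (v : 'rV[R]_n.+2) :
  enorm (Rtheta th v) = enorm v.
Proof.
rewrite !enormE !sq_split Rth0 Rth1.
under eq_bigr => k _ do rewrite Rth2.
by rewrite alg_id // cos2Dsin2.
Qed.

Lemma Rtheta_inv {R : realType} n th (v : 'rV[R]_n.+2) :
  Rtheta (- th) (Rtheta th v) = v.
Proof.
apply/rowP => i; case: (ord_cases _ i) => [->|[->|[k ->]]];
  rewrite ?Rth0 ?Rth1 ?Rth0 ?Rth2 // cosN sinN.
  by rewrite alg1 // cos2Dsin2.
by rewrite alg2 // cos2Dsin2.
Qed.

Lemma Rtheta0 {R : realType} n (v : 'rV[R]_n.+2) : Rtheta 0 v = v.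
Proof.
apply/rowP => i; case: (ord_cases _ i) => [->|[->|[k ->]]];
  rewrite ?Rth0 ?Rth1 ?Rth2 // cos0 sin0; ring.
Qed.

Lemma part_i {R : realType} n (a b : R) (y : 'rV[R]_n.+2) :
  enorm (Rtheta a y - Rtheta b y) <= `|a - b| * enorm y.
Proof.
rewrite !enormE; apply: sqrt_le_of; first by rewrite mulr_ge0 ?sqrtr_ge0.
rewrite exprMn sqr_sqrtr ?sq_ge0 // real_normK ?num_real //.
have z : \sum_(k < n) (Rtheta a y - Rtheta b y) 0 (lift ord0 (lift ord0 k)) ^+ 2 = 0.
  by apply: big1 => k _; rewrite mxBE !Rth2 subrr expr2 mul0r.
rewrite !sq_split z addr0 !mxBE !Rth0 !Rth1.
set y0 := y 0 ord0; set y1 := y 0 (lift ord0 ord0).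
set rest := \sum_(i < n) _.
have hrest : 0 <= rest by apply: sumr_ge0 => i _; apply: sqr_ge0.
have hT := cos_bound _ (a - b); rewrite cosB in hT.
have e : (y0 * cos a - y1 * sin a - (y0 * cos b - y1 * sin b)) ^+ 2 +
         (y0 * sin a + y1 * cos a - (y0 * sin b + y1 * cos b)) ^+ 2 =
         (y0 ^+ 2 + y1 ^+ 2) * ((cos a ^+ 2 + sin a ^+ 2) + (cos b ^+ 2 + sin b ^+ 2)
            - 2 * (cos a * cos b + sin a * sin b)) by ring.
rewrite e !cos2Dsin2.
have P0 : 0 <= y0 ^+ 2 + y1 ^+ 2 by rewrite addr_ge0 ?sqr_ge0.
have hT' : 1 + 1 - 2 * (cos a * cos b + sin a * sin b) <= (a - b) ^+ 2 by lra.
apply: le_trans (ler_wpM2l P0 hT') _.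
by rewrite mulrC ler_wpM2l ?sqr_ge0 // lerDl.
Qed.

Lemma Lip_ok {R : realType} (psi : R -> R) :
  lipschitz_nonneg psi -> lip_const_nonneg psi (Lip psi).
Proof.
move=> [L0 hL0].
have neS : nonempty [set L | lip_const_nonneg psi L] by exists L0.
have lb0 : lbound [set L | lip_const_nonneg psi L] 0 by move=> L [].
split; first exact: lb_le_inf neS lb0.
move=> s t s0 t0; case: (eqVneq s t) => [->|st].
  by rewrite !subrr normr0 mulr0.
have hst : 0 < `|s - t| by rewrite normr_gt0 subr_eq0.
rewrite -ler_pdivrMr //; apply: lb_le_inf neS _ => L [_ hL].
by rewrite ler_pdivrMr //; exact: hL.
Qed.

Lemma Phi_lip {R : realType} n (psi : R -> R) (L t0 : R) :
  0 <= L -> 0 <= t0 ->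
  (forall s t, 0 <= s -> 0 <= t -> `|psi s - psi t| <= L * `|s - t|) ->
  (forall t, t0 <= t -> psi t = 0) ->
  forall x y : 'rV[R]_n.+2,
  enorm (Rtheta (psi (enorm x)) x - Rtheta (psi (enorm y)) y) <= (L * t0 + 1) * enorm (x - y).
Proof.
move=> L0 t00 hL hz x y.
wlog hxy : x y / enorm x <= enorm y.
  move=> H; case: (lerP (enorm x) (enorm y)) => [/H//|/ltW h].
  by rewrite enorm_sym (enorm_sym x); exact: H.
set a := psi (enorm x); set b := psi (enorm y).
have -> : Rtheta a x - Rtheta b y = (Rtheta a x - Rtheta b x) + Rtheta b (x - y).
  by rewrite Rtheta_lin addrA subrK.
apply: le_trans (enorm_tri _ _) _.
rewrite enorm_Rtheta mulrDl mul1r lerD2r.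
apply: le_trans (part_i _ _ _ x) _.
case: (lerP (enorm x) t0) => hx.
  have h1 : `|a - b| <= L * enorm (x - y).
    apply: le_trans (hL _ _ (enorm_ge0 _) (enorm_ge0 _)) _.
    by rewrite ler_wpM2l // enorm_rev.
  rewrite mulrAC; apply: ler_pM => //; exact: enorm_ge0.
have ha : a = 0 by rewrite /a hz // ltW.
have hb : b = 0 by rewrite /b hz // (le_trans (ltW hx)).
rewrite ha hb subrr normr0 mul0r; apply: mulr_ge0; last exact: enorm_ge0.
exact: mulr_ge0.
Qed.

Theorem lemma3p2 (R : realType) (d : nat) (hd : (2 <= d)%N) :
  (forall (th1 th2 : R) (y : 'rV[R]_d),
      enorm (Rtheta th2 y - Rtheta th1 y) <= `|th2 - th1| * enorm y) /\
  (forall (t0 : R) (psi : R -> R),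
      0 < t0 ->
      lipschitz_nonneg psi ->
      (forall t, t0 <= t -> psi t = 0) ->
      bilipschitz (fun x : 'rV[R]_d => Rtheta (psi (enorm x)) x) (Lip psi * t0 + 1) /\
      (forall x : 'rV[R]_d, t0 <= enorm x -> Rtheta (psi (enorm x)) x = x)).
Proof.
case: d hd => [|[|n]] // _.
split; first by move=> th1 th2 y; exact: part_i.
move=> t0 psi t0pos hlip hz.
have [L0 hL] := Lip_ok psi hlip.
have t00 : 0 <= t0 by exact: ltW.
have hz' : forall t, t0 <= t -> (fun s => - psi s) t = 0.
  by move=> t /hz /= ->; rewrite oppr0.
have hL' : forall s t, 0 <= s -> 0 <= t ->
    `|(fun s => - psi s) s - (fun s => - psi s) t| <= Lip psi * `|s - t|.
  by move=> s t s0 t1 /=; rewrite -opprD normrN; exact: hL.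
have canc : forall x : 'rV[R]_n.+2,
    Rtheta (- psi (enorm (Rtheta (psi (enorm x)) x))) (Rtheta (psi (enorm x)) x) = x.
  by move=> x; rewrite enorm_Rtheta Rtheta_inv.
split; [split; [|split]|].
- by move=> x y /= e; rewrite -(canc x) e canc.
- by move=> x y; exact: Phi_lip.
- move=> x y.
  have := Phi_lip n (fun s => - psi s) (Lip psi) t0 L0 t00 hL' hz' (Rtheta (psi (enorm x)) x) (Rtheta (psi (enorm y)) y).
  by rewrite /= !canc.
- by move=> x hx; rewrite hz // Rtheta0.
Qed.
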